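(* For every set $X=\{X^1,\dots,X^m\}\subseteq S_n$ of $m\ge1$ distinct elements, $$|\mathrm{Elim}(X)|=\sum_{k=1}^m\ \sum_{1\le i_1<\cdots<i_k\le m}3^{z_{X(i_1,\dots,i_k)}}\Big(-2^{k-1}+\sum_{\alpha\in S_k}(-1)^{z(\alpha)+k+1}\,2^{\,z(\alpha)+|\mathrm{BSp}(X(i_1,\dots,i_k),\alpha)|}\Big),$$ where $X(i_1,\dots,i_k)=\{X^{i_1},\dots,X^{i_k}\}$.
   Context: $S_n$ is the set of all nonzero $n$-tuples in $\{-1,0,1\}^n$ whose first nonzero entry equals $1$. A tuple $t=(t_1,\dots,t_n)\in\{1,0,-1,u\}^n$ ($u$ a formal symbol) eliminates $s\in S_n$ if: (i) $t_i\neq0$ and $s_i\neq0$ for some $i$; (ii) there is $k\in\{+1,-1\}$ with $t_i=ks_i$ for all $i$ with $s_i\neq0$ and $t_i\neq0$; (iii) $s_i=0$ whenever $t_i=u$. For $X\subseteq S_n$, $\mathrm{Elim}(X)$ is the set of elements of $S_n$ eliminated by at least one element of $X$. For $Y=\{Y^1,\dots,Y^k\}\subseteq S_n$, $M_Y$ is the $k\times n$ matrix whose $i$-th row is $Y^i$ and $z_Y$ is the number of zero columns of $M_Y$. For a tuple $\alpha$, $z(\alpha)$ is the number of its zero coordinates. For $\alpha\in S_k$, $\mathrm{BSp}(Y,\alpha)$ is the set of indices $c\in\{1,\dots,n\}$ such that the $c$-th column of $M_Y$ is nonzero and equals $\pm(a_1\alpha_1,\dots,a_k\alpha_k)^T$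 for some $(a_1,\dots,a_k)\in\{0,1\}^k\setminus\{(0,\dots,0)\}$. *)

(* Defs.v *)
From HB Require Import structures.
From mathcomp Require Import all_boot all_order all_algebra.
Set Implicit Arguments. Unset Strict Implicit. Unset Printing Implicit Defensive.
Import Order.TTheory GRing.Theory Num.Theory.
Local Open Scope ring_scope.

(* Entries in {-1,0,1} are encoded by 'I_3, with value (i : 'I_3) - 1. *)
Definition trit := 'I_3.
Definition tv (x : trit) : int := (nat_of_ord x)%:Z - 1.

Definition vec (n : nat) := {ffun 'I_n -> trit}.

Definition inS (n : nat) (s : vec n) : bool :=
  [exists i : 'I_n, (tv (s i) == 1) &&
     [forall j : 'I_n, ((j < i)%N) ==> (tv (s j) == 0)]].

Definition Sset (n : nat) : {set vec n} := [set s : vec n | inS s].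

(* Eliminating tuples: entries in {1,0,-1,u}; [None] stands for u. *)
Definition etuple (n : nat) := {ffun 'I_n -> option trit}.

Definition enz (e : option trit) : bool :=
  match e with None => true | Some x => tv x != 0 end.

Definition eqk (k : int) (e : option trit) (v : int) : bool :=
  match e with None => false | Some x => tv x == k * v end.

Definition eliminates (n : nat) (t : etuple n) (s : vec n) : bool :=
  [&& [exists i : 'I_n, enz (t i) && (tv (s i) != 0)],
      [exists k : bool,
         [forall i : 'I_n, (enz (t i) && (tv (s i) != 0)) ==>
            eqk (if k then 1 else -1) (t i) (tv (s i))]] &
      [forall i : 'I_n, (t i == None) ==> (tv (s i) == 0)]].

Definition embed (n : nat) (x : vec n) : etuple n := [ffun i => Some (x i)].

Definition Elim (n : nat) (X : {set vec n}) : {set vec n} :=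
  [set s in Sset n | [exists x in X, eliminates (embed x) s]].

(* Y given by its rows Y^1..Y^k (the matrix M_Y) *)
Definition zY (n k : nat) (Y : 'I_k -> vec n) : nat :=
  #|[set c : 'I_n | [forall j : 'I_k, tv (Y j c) == 0]]|.

Definition zt (k : nat) (a : vec k) : nat := #|[set j : 'I_k | tv (a j) == 0]|.

Definition BSp (n k : nat) (Y : 'I_k -> vec n) (a : vec k) : {set 'I_n} :=
  [set c : 'I_n | ~~ [forall j : 'I_k, tv (Y j c) == 0] &&
     [exists b : {ffun 'I_k -> bool}, [exists j, b j] &&
        ([forall j : 'I_k, tv (Y j c) == (if b j then tv (a j) else 0)] ||
         [forall j : 'I_k, tv (Y j c) == - (if b j then tv (a j) else 0)])]].

Definition vec0 (n : nat) : vec n := [ffun => ord0].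

(* X(i_1,...,i_k) for I = {i_1 < ... < i_k} (0-based indices into Xs) *)
Definition rowsOf (n : nat) (Xs : seq (vec n)) (I : {set 'I_(size Xs)}) (k : nat)
  : 'I_k -> vec n :=
  fun j => nth (vec0 n) Xs (nth 0%N (map (@nat_of_ord _) (enum I)) j).

Definition term (n k : nat) (Y : 'I_k -> vec n) : int :=
  (3%:Z) ^+ zY Y *
  (- (2%:Z) ^+ k.-1 +
   \sum_(a in Sset k) (-1) ^+ (zt a + k + 1) * (2%:Z) ^+ (zt a + #|BSp Y a|)).

(* Main.v *)
Require Import Defs.
From HB Require Import structures.
From mathcomp Require Import all_boot all_order all_algebra.
From mathcomp Require Import zify ring lra.
Set Implicit Arguments. Unset Strict Implicit. Unset Printing Implicit Defensive.
Import Order.TTheory GRing.Theory Num.Theory.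
Local Open Scope ring_scope.

Definition t0 : trit := Ordinal (isT : (1 < 3)%N).
Definition tneg (x : trit) : trit := rev_ord x.
Definition z0 (n : nat) : vec n := [ffun _ => t0].
Definition vneg (n : nat) (s : vec n) : vec n := [ffun i => tneg (s i)].

Lemma tv_neg x : tv (tneg x) = - tv x.
Proof. by case: x => [[|[|[|]]] //]. Qed.

Lemma tv_eq0 x : (tv x == 0) = (x == t0).
Proof. by case: x => [[|[|[|]]] //]. Qed.

Lemma tv_inj : injective tv.
Proof.
by move=> [[|[|[|]]] //] Hx [[|[|[|]]] //] Hy; rewrite /tv /= => H; apply/val_inj.
Qed.

Lemma vneg_inj n : injective (@vneg n).
Proof.
move=> s t H; apply/ffunP => i; have := congr1 (fun f : vec n => f i) H.
rewrite !ffunE => /(congr1 tv); rewrite !tv_neg => /oppr_inj; exact: tv_inj.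
Qed.

Lemma vnegK n : involutive (@vneg n).
Proof. by move=> s; apply/ffunP => i; rewrite !ffunE /tneg rev_ordK. Qed.

Lemma vneg_eq0 n (s : vec n) : (vneg s == z0 n) = (s == z0 n).
Proof.
apply/eqP/eqP => [H|->]; last by apply/ffunP => i; rewrite !ffunE; apply/val_inj.
by rewrite -(vnegK s) H; apply/ffunP => i; rewrite !ffunE; apply/val_inj.
Qed.

Lemma inS_first n (t : vec n) (i0 : 'I_n) :
  (forall j : 'I_n, (j < i0)%N -> tv (t j) = 0) -> tv (t i0) != 0 ->
  inS t = (tv (t i0) == 1).
Proof.
move=> Hlt Hnz; apply/existsP/idP => [[i /andP[/eqP Hi /forallP Hj]]|H].
  case: (ltngtP i i0) => [lt|gt|eq].
  - by move: (Hlt _ lt); rewrite Hi.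
  - by move: (Hj i0); rewrite gt /= (negbTE Hnz).
  - by rewrite (_ : i0 = i) ?Hi //; apply/val_inj.
exists i0; rewrite H /=; apply/forallP => j; apply/implyP => lt.
by rewrite Hlt.
Qed.

Lemma inS_z0 n : inS (z0 n) = false.
Proof.
apply/existsP => -[i /andP[]]; by rewrite ffunE.
Qed.

Lemma inS_neg n (s : vec n) : inS (vneg s) = (s != z0 n) && ~~ inS s.
Proof.
have [->|nz] := eqVneq s (z0 n).
  by rewrite (_ : vneg (z0 n) = z0 n) ?inS_z0 //; apply/eqP; rewrite vneg_eq0.
have ex : exists i : 'I_n, tv (s i) != 0.
  apply/existsP; apply: contraNT nz => /existsPn H; apply/eqP/ffunP => i.
  by move: (H i); rewrite negbK ffunE tv_eq0 => /eqP.
pose P := fun i : 'I_n => tv (s i) != 0.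
have [i0 Pi0] := ex.
case: (@arg_minnP _ i0 P (fun i : 'I_n => nat_of_ord i) Pi0) => m Pm Hm.
have Hlt : forall j : 'I_n, (j < m)%N -> tv (s j) = 0.
  move=> j lt; apply/eqP; apply: contraTT lt => Pj; rewrite -leqNgt; exact: Hm.
rewrite (inS_first Hlt Pm) (@inS_first _ (vneg s) m).
- rewrite ffunE tv_neg /=; move: Pm; rewrite /P; case: (s m) => [[|[|[|]]] //].
- by move=> j lt; rewrite ffunE tv_neg Hlt.
- by rewrite /vneg ffunE tv_neg oppr_eq0.
Qed.

Lemma halve n (F : vec n -> int) : (forall s, F (vneg s) = F s) ->
  \sum_(s : vec n) F s = F (z0 n) + 2 * \sum_(s in Sset n) F s.
Proof.
move=> HF.
rewrite (bigID (fun s => s \in Sset n)) /= addrC.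
rewrite (bigD1 (z0 n)) /=; last by rewrite inE inS_z0.
rewrite -addrA; congr (_ + _).
rewrite (reindex_inj (@vneg_inj n)) /=.
have -> : \sum_(j | (vneg j \notin Sset n) && (vneg j != z0 n)) F (vneg j)
        = \sum_(s in Sset n) F s.
  apply: eq_big => s; last by move=> _; rewrite HF.
  rewrite !inE inS_neg vneg_eq0 negb_and negbK.
  have [->|] := eqVneq s (z0 n); first by rewrite inS_z0.
  by move=> _ /=; rewrite negbK andbT.
by rewrite mulr2n mulrDl mul1r.
Qed.
Definition E n (x s : vec n) : int := (eliminates (embed x) s)%:R.
Definition compat n (y s : vec n) (v : int) : bool :=
  [forall i, (tv (y i) != 0) && (tv (s i) != 0) ==> (tv (y i) == v * tv (s i))].
Definition ovl n (y s : vec n) : bool :=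
  [exists i, (tv (y i) != 0) && (tv (s i) != 0)].
Definition w (a : trit) : int := if tv a == 0 then -2 else 1.

Lemma elimE n (y s : vec n) :
  eliminates (embed y) s = ovl y s && (compat y s 1 || compat y s (-1)).
Proof.
rewrite /eliminates.
have -> : [forall i, (embed y i == None) ==> (tv (s i) == 0)] by
  apply/forallP => i; rewrite ffunE.
have -> : [exists i, enz (embed y i) && (tv (s i) != 0)] = ovl y s by
  apply: eq_existsb => i; rewrite ffunE.
rewrite andbT; congr (_ && _).
have Hk : forall k : int, [forall i, enz (embed y i) && (tv (s i) != 0) ==>
     eqk k (embed y i) (tv (s i))] = compat y s k.
  by move=> k; apply: eq_forallb => i; rewrite ffunE.
apply/existsP/orP => [[[] H]|[H|H]].
- by left; rewrite -Hk.
- by right; rewrite -Hk.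
- by exists true; rewrite Hk.
- by exists false; rewrite Hk.
Qed.

Lemma compat_novl n (y s : vec n) v : ~~ ovl y s -> compat y s v.
Proof.
move=> /existsPn H; apply/forallP => i; by rewrite (negbTE (H i)).
Qed.

Lemma E_split n (y s : vec n) :
  E y s = \sum_(a : trit) w a * (compat y s (tv a))%:R.
Proof.
rewrite !big_ord_recl big_ord0 /= /E elimE /w /=.
have tv0 : tv ord0 = -1 by [].
have tv1 : tv (lift ord0 ord0 : 'I_3) = 0 by [].
have tv2 : tv (lift ord0 (lift ord0 ord0) : 'I_3) = 1 by [].
rewrite tv0 tv1 tv2 /=.
case: (boolP (ovl y s)) => Ho.
- have [i /andP[Hy Hs]] := existsP Ho.
  have -> : compat y s 0 = false.
    by apply/negbTE/negP => /forallP /(_ i); rewrite Hy Hs /= mul0r (negbTE Hy).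
  have Hn : ~~ (compat y s 1 && compat y s (-1)).
    apply/negP => /andP[/forallP /(_ i) + /forallP /(_ i)].
    rewrite Hy Hs /= => /eqP -> /eqP; rewrite mul1r mulN1r => /eqP.
    move: Hs; lia.
  move: Hn; case: (compat y s 1); case: (compat y s (-1)) => //= _; lia.
- rewrite !compat_novl //=; lia.
Qed.

Lemma prod_bool (I : finType) (b : I -> bool) :
  \prod_(i : I) ((b i)%:R : int) = ([forall i, b i])%:R.
Proof.
case: (boolP [forall i, b i]) => [/forallP H|/forallPn [i Hi]].
  by rewrite big1 // => i _; rewrite H.
by rewrite (bigD1 i) //= (negbTE Hi) mul0r.
Qed.

Lemma prod_ifc (I : finType) (A : {set I}) (x : int) :
  \prod_(c : I) (if c \in A then x else 1) = x ^+ #|A|.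
Proof. by rewrite -big_mkcond prodr_const. Qed.

Definition D n k (Y : 'I_k -> vec n) (a : vec k) (c : 'I_n) (sg : trit) : bool :=
  [forall j, (tv (Y j c) != 0) && (tv sg != 0) ==> (tv (Y j c) == tv (a j) * tv sg)].

Definition Zs n k (Y : 'I_k -> vec n) : {set 'I_n} :=
  [set c : 'I_n | [forall j : 'I_k, tv (Y j c) == 0]].

Lemma compat_prod n k (Y : 'I_k -> vec n) (a : vec k) (s : vec n) :
  \prod_(j < k) ((compat (Y j) s (tv (a j)))%:R : int) =
  \prod_(c : 'I_n) ((D Y a c (s c))%:R : int).
Proof.
rewrite !prod_bool; congr ((_ : bool)%:R).
apply/forallP/forallP => H x.
  apply/forallP => j; move: (H j) => /forallP /(_ x).
  by rewrite mulrC.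
apply/forallP => c; move: (H c) => /forallP /(_ x).
by rewrite mulrC.
Qed.

Lemma col_count n k (Y : 'I_k -> vec n) (a : vec k) (c : 'I_n) :
  \sum_(sg : trit) ((D Y a c sg)%:R : int) =
  (if c \in Zs Y then 3 else 1) * (if c \in BSp Y a then 2 else 1).
Proof.
rewrite !big_ord_recl big_ord0 /=.
have tv0 : tv ord0 = -1 by [].
have tv1 : tv (lift ord0 ord0 : 'I_3) = 0 by [].
have tv2 : tv (lift ord0 (lift ord0 ord0) : 'I_3) = 1 by [].
rewrite /D tv0 tv1 tv2 /=.
have -> : [forall j, (tv (Y j c) != 0) && false ==> (tv (Y j c) == tv (a j) * 0)].
  by apply/forallP => j; rewrite andbF.
rewrite /BSp !inE.
case: (boolP [forall j, tv (Y j c) == 0]) => [/forallP Hz|Hnz] /=.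
  have Hv : forall v : int, [forall j, (tv (Y j c) != 0) && true ==>
           (tv (Y j c) == tv (a j) * v)].
    by move=> v; apply/forallP => j; rewrite Hz.
  by rewrite !Hv.
have [j0 Hj0] := forallPn Hnz.
set D1 := [forall j, _ ==> (tv (Y j c) == tv (a j) * 1)].
set Dm := [forall j, _ ==> (tv (Y j c) == tv (a j) * -1)].
have Hn : ~~ (D1 && Dm).
  apply/negP => /andP[/forallP /(_ j0) + /forallP /(_ j0)].
  rewrite Hj0 /= => /eqP H1 /eqP H2; move: Hj0 H1 H2; lia.
have HB : (D1 || Dm) = [exists b : {ffun 'I_k -> bool}, [exists j, b j] &&
     ([forall j, tv (Y j c) == (if b j then tv (a j) else 0)] ||
      [forall j, tv (Y j c) == - (if b j then tv (a j) else 0)])].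
  apply/orP/existsP => [H|[b /andP[_ /orP[/forallP H|/forallP H]]]].
  - exists [ffun j => tv (Y j c) != 0]; apply/andP; split.
      by apply/existsP; exists j0; rewrite ffunE.
    case: H => /forallP H; [apply/orP; left|apply/orP; right];
      apply/forallP => j; rewrite ffunE; move: (H j);
      case: (boolP (tv (Y j c) != 0)) => Hj /=; try (move: Hj; lia).
  - left; apply/forallP => j; move: (H j).
    case: (b j) => /= /eqP ->; lia.
  - right; apply/forallP => j; move: (H j).
    case: (b j) => /= /eqP ->; lia.
rewrite -HB; clear HB; move: Hn; case: D1; case: Dm => //=.
Qed.

Lemma sum_s_count n k (Y : 'I_k -> vec n) (a : vec k) :
  \sum_(s : vec n) \prod_(j < k) ((compat (Y j) s (tv (a j)))%:R : int) =
  3 ^+ zY Y * 2 ^+ #|BSp Y a|.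
Proof.
under eq_bigr => s _ do rewrite compat_prod.
rewrite -(bigA_distr_bigA (fun c sg => ((D Y a c sg)%:R : int))) /=.
under eq_bigr => c _ do rewrite col_count.
by rewrite big_split /= !prod_ifc.
Qed.

Lemma vnegE n (s : vec n) i : vneg s i = tneg (s i).
Proof. by rewrite ffunE. Qed.

Lemma Gsplit n k (Y : 'I_k -> vec n) (s : vec n) :
  \prod_(j < k) E (Y j) s = \sum_(a : vec k) (-2) ^+ (zt a) *
     \prod_(j < k) ((compat (Y j) s (tv (a j)))%:R : int).
Proof.
under eq_bigr => j _ do rewrite E_split.
rewrite (bigA_distr_bigA (fun j al => w al * ((compat (Y j) s (tv al))%:R : int))).
apply: eq_bigr => a _; rewrite big_split /=; congr (_ * _).
rewrite /zt -prod_ifc; apply: eq_bigr => j _; by rewrite inE /w.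
Qed.

Lemma ovl_neg n (y s : vec n) : ovl y (vneg s) = ovl y s.
Proof. by apply: eq_existsb => i; rewrite vnegE tv_neg oppr_eq0. Qed.

Lemma compat_neg n (y s : vec n) v : compat y (vneg s) v = compat y s (- v).
Proof. by apply: eq_forallb => i; rewrite vnegE tv_neg oppr_eq0 mulrN mulNr. Qed.

Lemma E_neg n (y s : vec n) : E y (vneg s) = E y s.
Proof. by rewrite /E !elimE ovl_neg !compat_neg opprK orbC. Qed.

Lemma E_z0 n (y : vec n) : E y (z0 n) = 0.
Proof.
rewrite /E elimE (_ : ovl y (z0 n) = false) //.
by apply/existsPn => i; rewrite ffunE /= andbF.
Qed.

Lemma zt_neg k (a : vec k) : zt (vneg a) = zt a.
Proof. by apply: eq_card => j; rewrite !inE vnegE tv_neg oppr_eq0. Qed.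

Lemma BSp_neg n k (Y : 'I_k -> vec n) (a : vec k) : BSp Y (vneg a) = BSp Y a.
Proof.
apply/setP => c; rewrite !inE; congr (_ && _); apply: eq_existsb => b.
congr (_ && _).
have e1 : forall j, (if b j then tv (vneg a j) else 0) =
                    - (if b j then tv (a j) else 0).
  by move=> j; rewrite vnegE tv_neg; case: (b j); rewrite ?oppr0.
have -> : [forall j, tv (Y j c) == (if b j then tv (vneg a j) else 0)] =
          [forall j, tv (Y j c) == - (if b j then tv (a j) else 0)].
  by apply: eq_forallb => j; rewrite e1.
have -> : [forall j, tv (Y j c) == - (if b j then tv (vneg a j) else 0)] =
          [forall j, tv (Y j c) == (if b j then tv (a j) else 0)].
  by apply: eq_forallb => j; rewrite e1 opprK.
by rewrite orbC.
Qed.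

Lemma zt_z0 k : zt (z0 k) = k.
Proof.
rewrite /zt -[RHS](card_ord k); apply: eq_card => j; by rewrite !inE ffunE.
Qed.

Lemma BSp_z0 n k (Y : 'I_k -> vec n) : BSp Y (z0 k) = set0.
Proof.
apply/setP => c; rewrite !inE; apply/negbTE/negP => /andP[Hnz /existsP[b /andP[_ H]]].
move/negP: Hnz; apply; apply/forallP => j.
case/orP: H => /forallP /(_ j); rewrite ffunE /=;
  case: (b j); rewrite /= ?oppr0 //.
Qed.

Lemma key n k (Y : 'I_k.+1 -> vec n) :
  term Y = (-1) ^+ k.+2 * \sum_(s in Sset n) \prod_(j < k.+1) E (Y j) s.
Proof.
pose G := fun s : vec n => \prod_(j < k.+1) E (Y j) s.
pose H := fun a : vec k.+1 => (-2) ^+ zt a * (3 ^+ zY Y * 2 ^+ #|BSp Y a| : int).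
have hall : \sum_(s : vec n) G s = \sum_(a : vec k.+1) H a.
  rewrite /G /H; under eq_bigr => s _ do rewrite Gsplit.
  rewrite exchange_big /=; apply: eq_bigr => a _.
  by rewrite -big_distrr /= sum_s_count.
have hG := @halve n G (fun s => eq_bigr _ (fun j _ => E_neg (Y j) s)).
have hH : \sum_(a : vec k.+1) H a = H (z0 k.+1) + 2 * \sum_(a in Sset k.+1) H a.
  by apply: halve => a; rewrite /H zt_neg BSp_neg.
have G0 : G (z0 n) = 0 by rewrite /G big_ord_recl E_z0 mul0r.
have H0 : H (z0 k.+1) = (-2) ^+ k.+1 * 3 ^+ zY Y.
  by rewrite /H zt_z0 BSp_z0 cards0 expr0 mulr1.
rewrite G0 add0r hall hH H0 in hG.
rewrite /term /=.
set SG := \sum_(s in Sset n) _.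
set SH := \sum_(a in Sset k.+1) H a.
set P := \sum_(a in Sset k.+1) _.
have hP : P * 3 ^+ zY Y = (-1) ^+ k * SH.
  rewrite /P /SH big_distrl big_distrr /=; apply: eq_bigr => a _.
  have e : (-2 : int) = -1 * 2 by rewrite mulN1r.
  rewrite /H e exprMn !exprD !exprS expr0.
  move: ((-1 : int) ^+ zt a) ((2 : int) ^+ zt a) ((-1 : int) ^+ k)
        ((2 : int) ^+ #|BSp Y a|) (3 ^+ zY Y : int) => u v x y z.
  ring.
have e2 : (-1) ^+ k * (-1) ^+ k = 1 :> int.
  by rewrite -exprD addnn -mul2n exprM sqrrN !expr1n.
have h2 : (-2 : int) ^+ k.+1 = - 2 * ((-1) ^+ k * 2 ^+ k).
  by rewrite exprS -mulN1r exprMn mulN1r mulNr.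
rewrite h2 in hG.
apply/eqP; rewrite -subr_eq0; apply/eqP.
suff : 2 * (3 ^+ zY Y * (- 2 ^+ k + P) - (-1) ^+ k.+2 * SG) = 0.
  by move/eqP; rewrite mulf_eq0 /= => /eqP.
have -> : (-1) ^+ k.+2 = (-1) ^+ k :> int by rewrite !exprS mulN1r mulN1r opprK.
rewrite mulrBr [2 * ((-1) ^+ k * SG)]mulrCA -hG.
rewrite mulrDr mulrDr mulrDr.
set e := (-1) ^+ k in hP e2 *.
rewrite (mulrC (3 ^+ zY Y) P) hP.
set A := 2 ^+ k; set B := 3 ^+ zY Y.
have -> : e * (- 2 * (e * A) * B) = - 2 * (e * e) * A * B by ring.
rewrite e2; ring.
Qed.

Lemma expand m (f : 'I_m -> int) :
  \prod_(i : 'I_m) (1 - f i) =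
  \sum_(J : {set 'I_m}) (-1) ^+ #|J| * \prod_(i in J) f i.
Proof.
under eq_bigr => i _ do rewrite addrC.
rewrite bigA_distr; apply: eq_bigr => J _.
by rewrite -big_mkcond /= prodrN.
Qed.

Lemma rows_prod n (Xs : seq (vec n)) (x0 : 'I_(size Xs)) (I : {set 'I_(size Xs)}) k s :
  #|I| = k ->
  \prod_(j < k) E (@rowsOf n Xs I k j) s =
  \prod_(i in I) E (nth (vec0 n) Xs i) s.
Proof.
move=> cI.
rewrite -[in RHS]big_enum [in RHS](big_nth x0) -cardE cI big_mkord; apply: eq_bigr => j _.
by rewrite /rowsOf (nth_map x0) // -cardE cI.
Qed.

Theorem mainTheorem13 (n : nat) (Xs : seq (vec n)) :
  (0 < size Xs)%N -> uniq Xs -> all (@inS n) Xs ->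
  (#|Elim [set x in Xs]|%:Z : int) =
  \sum_(1 <= k < (size Xs).+1)
     \sum_(I : {set 'I_(size Xs)} | #|I| == k) term (@rowsOf n Xs I k).
Proof.
move=> hm _ _.
set m := size Xs.
pose x0 : 'I_m := Ordinal hm.
pose p := fun (i : 'I_m) (s : vec n) => E (nth (vec0 n) Xs i) s.
pose Phi := fun I : {set 'I_m} =>
  (-1) ^+ #|I|.+1 * \sum_(s in Sset n) \prod_(i in I) p i s.
have step1 : \sum_(1 <= k < m.+1) \sum_(I : {set 'I_m} | #|I| == k)
     term (@rowsOf n Xs I k) =
   \sum_(1 <= k < m.+1) \sum_(I : {set 'I_m} | #|I| == k) Phi I.
  apply: eq_big_nat => k /andP[k1 _]; apply: eq_bigr => I /eqP cI.
  case: k k1 cI => // k _ cI.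
  rewrite key /Phi cI; congr (_ * _); apply: eq_bigr => s _.
  exact: rows_prod.
have step2 : \sum_(I : {set 'I_m}) Phi I =
   \sum_(0 <= k < m.+1) \sum_(I : {set 'I_m} | #|I| == k) Phi I.
  rewrite (partition_big (fun I : {set 'I_m} => (inord #|I| : 'I_m.+1)) xpredT) //=.
  rewrite big_mkord; apply: eq_bigr => j _; apply: eq_bigl => I.
  have hc : (#|I| < m.+1)%N.
    by rewrite ltnS -[X in (_ <= X)%N](card_ord m) max_card.
  by rewrite -val_eqE /= inordK.
rewrite big_ltn // in step2.
have h0 : \sum_(I : {set 'I_m} | #|I| == 0) Phi I = Phi set0.
  by rewrite (eq_bigl (fun I => I == set0)) ?big_pred1_eq // => I; rewrite cards_eq0.
rewrite h0 in step2.
rewrite step1.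
have -> : \sum_(1 <= k < m.+1) \sum_(I : {set 'I_m} | #|I| == k) Phi I =
    \sum_(I : {set 'I_m}) Phi I - Phi set0 by rewrite step2 addrC addKr.
have hL : (#|Elim [set x in Xs]|%:Z : int) =
    \sum_(s in Sset n) (1 - \prod_(i : 'I_m) (1 - p i s)).
  rewrite -natz -sumr_const /Elim.
  rewrite (eq_bigl (fun s => (s \in Sset n) &&
     [exists x in [set x in Xs], eliminates (embed x) s])); last by move=> s; rewrite inE.
  rewrite big_mkcondr /=; apply: eq_bigr => s _.
  have -> : \prod_(i : 'I_m) (1 - p i s) =
     ([forall i : 'I_m, ~~ eliminates (embed (nth (vec0 n) Xs i)) s])%:R.
    rewrite -prod_bool; apply: eq_bigr => i _; rewrite /p /E.
    by case: (eliminates _ _).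
  have -> : [exists x in [set x in Xs], eliminates (embed x) s] =
      ~~ [forall i : 'I_m, ~~ eliminates (embed (nth (vec0 n) Xs i)) s].
    apply/existsP/forallPn => [[x /andP[]]|[i Hi]].
      rewrite inE => /(nthP (vec0 n)) [i im <-] H.
      by exists (Ordinal im); rewrite negbK.
    exists (nth (vec0 n) Xs i); rewrite inE mem_nth //=.
    by rewrite negbK in Hi.
  by case: [forall i, _]; rewrite /= ?subrr ?subr0.
rewrite hL.
under eq_bigr => s _ do rewrite expand.
rewrite sumrB exchange_big /= /Phi cards0.
have e1 : \sum_(s in Sset n) \prod_(i in set0) p i s = \sum_(s in Sset n) (1 : int).
  by apply: eq_bigr => s _; rewrite big_set0.
rewrite e1 expr1 mulN1r opprK.
have e2 : \sum_(J : {set 'I_m}) \sum_(s in Sset n) (-1) ^+ #|J| * \prod_(i in J) p i s =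
   - \sum_(J : {set 'I_m}) (-1) ^+ #|J|.+1 * \sum_(s in Sset n) \prod_(i in J) p i s.
  rewrite -sumrN; apply: eq_bigr => J _.
  by rewrite exprS mulN1r mulNr opprK big_distrr.
by rewrite e2 opprK addrC.
Qed.
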